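(* Let $K$ be a compact Hausdorff space containing a nontrivial convergent sequence (a sequence $(x_n)$ converging to a point $x\notin\{x_n:n\in\mathbb{N}\}$). Then $C(K)$ fails the ball fixed point property. In particular, $C(K)$ fails the ball fixed point property for every infinite metrizable compact space $K$.
   Context: $C(K)$ is the real Banach space of continuous functions $K\to\mathbb{R}$ with the sup norm. A real Banach space $X$ has the ball fixed point property (BFPP) if every nonexpansive map $T\colon B_X\to B_X$ (i.e. $\|Tx-Ty\|\le\|x-y\|$) has a fixed point, where $B_X$ is the closed unit ball. *)

(* Defs.v *)
From HB Require Import structures.
From mathcomp Require Import all_boot all_order all_algebra.
From mathcomp Require Import all_classical all_reals all_analysis.
Unset Printing Implicit Defensive.
Import Order.TTheory GRing.Theory Num.Theory numFieldNormedType.Exports.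
Local Open Scope classical_set_scope.
Local Open Scope ring_scope.

Definition supnorm (R : realType) (K : topologicalType) (f : K -> R) : R :=
  sup (range (fun x => `|f x|)).

Definition CK_ball (R : realType) (K : topologicalType) : set (K -> R) :=
  [set f : K -> R | continuous f /\ supnorm R K f <= 1].

Definition CK_BFPP (R : realType) (K : topologicalType) : Prop :=
  forall T : (K -> R) -> (K -> R),
    (forall f, CK_ball R K f -> CK_ball R K (T f)) ->
    (forall f g, CK_ball R K f -> CK_ball R K g ->
       supnorm R K (T f - T g) <= supnorm R K (f - g)) ->
    exists2 f, CK_ball R K f & T f = f.

Definition has_nontrivial_cvg_seq (K : topologicalType) : Prop :=
  exists (u : nat -> K) (x : K), u @ \oo --> x /\ (forall n, u n <> x).

(* Main.v *)
Require Import Defs.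
From HB Require Import structures.
From mathcomp Require Import all_boot all_order all_algebra.
From mathcomp Require Import all_classical all_reals all_analysis.
From mathcomp Require Import ring lra zify.
From Stdlib Require Import Lia.
Set Implicit Arguments. Unset Strict Implicit. Unset Printing Implicit Defensive.
Import Order.TTheory GRing.Theory Num.Theory numFieldNormedType.Exports.
Local Open Scope classical_set_scope.
Local Open Scope ring_scope.


Lemma supnorm_ub (R : realType) (K : topologicalType) (f : K -> R) :
  compact [set: K] -> continuous f -> has_ubound (range (fun x => `|f x|)).
Proof.
move=> cK cf.
have cn : continuous (fun x => `|f x|).
  by move=> x; apply: continuous_comp; [exact: cf| exact: norm_continuous].
have := continuous_compact (continuous_subspaceT cn) cK.
move/compact_bounded => [M [Mr HM]].
exists (`|M| + 1) => _ [y _ <-].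
have := HM (`|M| + 1); rewrite (le_lt_trans (ler_norm _)) ?ltrDl// => /(_ erefl (`|f y|)).
move=> /(_ (ex_intro2 _ _ y I erefl)) /=; rewrite normr_id; exact.
Qed.

Lemma supnorm_ge (R : realType) (K : topologicalType) (f : K -> R) :
  compact [set: K] -> continuous f -> forall y, `|f y| <= supnorm R K f.
Proof.
move=> cK cf y; rewrite /supnorm.
apply: sup_upper_bound; last by exists y.
split; first by exists `|f y|, y.
exact: supnorm_ub.
Qed.

Lemma supnorm_le (R : realType) (K : topologicalType) (f : K -> R) (c : R) (y0 : K) :
  (forall y, `|f y| <= c) -> supnorm R K f <= c.
Proof.
move=> H; apply: ge_sup; first by exists `|f y0|, y0.
by move=> _ [y _ <-].
Qed.


Lemma psum_cont (R : realType) (X : topologicalType) (g : nat -> X -> R) N :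
  (forall k, continuous (g k)) -> continuous (fun y => \sum_(0 <= k < N) g k y).
Proof.
move=> cg; elim: N => [|N IH].
  by under eq_fun do rewrite big_geq//; exact: cst_continuous.
under eq_fun do rewrite big_nat_recr//=.
by move=> y; apply: continuousD; [exact: IH|exact: cg].
Qed.

Lemma ser_cvg (R : realType) (X : Type) (g : nat -> X -> R) :
  (forall e, 0 < e -> exists N, forall y m n, (N <= m)%N -> `|\sum_(m <= k < n) g k y| <= e) ->
  forall y, cvgn (series (fun k => g k y)).
Proof.
move=> H y; apply/cauchy_cvgP/cauchy_seriesP => e e0.
have [N HN] := H (e / 2) (divr_gt0 e0 (ltr0Sn _ 1)).
exists ([set m | (N <= m)%N], setT); first by split => //; exists N.
move=> [m n] [/= Nm _]; apply: (le_lt_trans (HN y m n Nm)).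
by rewrite ltr_pdivrMr// ltr_pMr// ltr1n.
Qed.

Lemma ser_tail (R : realType) (X : Type) (g : nat -> X -> R) e N :
  (forall e, 0 < e -> exists N, forall y m n, (N <= m)%N -> `|\sum_(m <= k < n) g k y| <= e) ->
  (forall y m n, (N <= m)%N -> `|\sum_(m <= k < n) g k y| <= e) ->
  forall y, `|limn (series (fun k => g k y)) - \sum_(0 <= k < N) g k y| <= e.
Proof.
move=> H HN y.
have cv := @ser_cvg _ _ g H y.
have cv2 : (fun n => `|series (fun k => g k y) n - \sum_(0 <= k < N) g k y|) @ \oo -->
   `|limn (series (fun k => g k y)) - \sum_(0 <= k < N) g k y|.
  apply: cvg_norm; apply: cvgB => //; exact: cvg_cst.
apply: (cvgr_to_le cv2); exists N => // n /= Nn.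
rewrite /series /= (@big_cat_nat _ _ _ N 0 n _ _ (leq0n N) Nn) /= addrC addrK.
exact: HN.
Qed.

Lemma ser_cont (R : realType) (X : topologicalType) (g : nat -> X -> R) :
  (forall k, continuous (g k)) ->
  (forall e, 0 < e -> exists N, forall y m n, (N <= m)%N -> `|\sum_(m <= k < n) g k y| <= e) ->
  continuous (fun y => limn (series (fun k => g k y))).
Proof.
move=> cg H y0; apply/cvgrPdist_le => e e0.
have e30 : 0 < e / 3 by rewrite divr_gt0.
have [N HN] := H (e / 3) e30.
have T := ser_tail H HN.
have Pc : continuous (fun y => \sum_(0 <= k < N) g k y) := psum_cont (N:=N) cg.
have /cvgrPdist_le/(_ _ e30) := Pc y0.
apply: filterS => y Hy /=.
set S := limn (series (g^~ y)); set S0 := limn (series (g^~ y0)).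
set P := \sum_(0 <= k < N) g k y; set P0 := \sum_(0 <= k < N) g k y0.
have -> : S0 - S = (S0 - P0) + (P0 - P) - (S - P) by rewrite /=; ring.
rewrite (le_trans (ler_normB _ _))// (le_trans (lerD (ler_normD _ _) (lexx _)))//.
have := T y0; have := T y; rewrite -/S -/S0 -/P -/P0 => h1 h2.
have -> : e = e / 3 + e / 3 + e / 3 by field.
by rewrite !lerD.
Qed.


Lemma geo_sum (R : realType) m n : (m <= n)%N ->
  \sum_(m <= k < n) (2^-1 : R) ^+ k.+1 = 2^-1 ^+ m - 2^-1 ^+ n.
Proof.
elim: n => [|n IH] mn; first by move: mn; rewrite leqn0 => /eqP ->; rewrite big_geq// subrr.
move: mn; rewrite leq_eqVlt => /orP[/eqP ->|]; first by rewrite big_geq// subrr.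
rewrite ltnS => mn; rewrite big_nat_recr//= IH//.
by rewrite exprS; field.
Qed.

Lemma geo_small (R : realType) (e : R) : 0 < e -> exists N, (2^-1 : R) ^+ N <= e.
Proof.
move=> e0.
have : (fun n => (2^-1 : R) ^+ n) @ \oo --> (0:R).
  apply: cvg_expr; rewrite gtr0_norm ?invr_gt0// invf_lt1// ltr1n//.
move/cvgrPdist_le => /(_ e e0) [N _ HN]; exists N.
by have := HN N (leqnn N); rewrite sub0r normrN ger0_norm// exprn_ge0// invr_ge0.
Qed.

Lemma exists_h (R : realType) (K : topologicalType) (u : nat -> K) (x : K) :
  compact [set: K] -> hausdorff_space K -> (forall n, u n <> x) ->
  exists h : K -> R, [/\ continuous h, h x = 0, (forall n, 0 < h (u n)) &
    (forall y, 0 <= h y)].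
Proof.
move=> cK hK ux.
have nK := compact_normal hK cK.
have cl1 := accessible_closed_set1 (hausdorff_accessible hK).
have sep : forall n, uniform_separator [set x] [set u n].
  move=> n; apply: (proj1 (@normal_separatorP R K) nK) => //.
  by apply/seteqP; split => // y [/= -> /esym/ux].
pose U n := Urysohn (R:=R) [set x] [set u n].
have U01 : forall n y, 0 <= U n y <= 1.
  move=> n y; have := @Urysohn_range K R [set x] [set u n] (U n y) (ex_intro2 _ _ y I erefl).
  by rewrite /= in_itv.
have Ux : forall n, U n x = 0.
  by move=> n; apply: (@Urysohn_sub0 K R _ _ (sep n)); exists x.
have Uu : forall n, U n (u n) = 1.
  by move=> n; apply: (@Urysohn_sub1 K R _ _ (sep n)); exists (u n).
pose g k y := (2^-1 : R) ^+ k.+1 * U k y.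
have g0 : forall k y, 0 <= g k y.
  by move=> k y; rewrite mulr_ge0 ?exprn_ge0 ?invr_ge0//; case/andP: (U01 k y).
have gle : forall k y, g k y <= 2^-1 ^+ k.+1.
  move=> k y; rewrite /g ler_piMr ?exprn_ge0 ?invr_ge0//; by case/andP: (U01 k y).
have Hc : forall e, 0 < e -> exists N, forall y m n, (N <= m)%N ->
    `|\sum_(m <= k < n) g k y| <= e.
  move=> e e0; have [N HN] := geo_small e0; exists N => y m n Nm.
  rewrite ger0_norm; last by rewrite sumr_ge0.
  have [mn|nm] := leqP m n; last by rewrite big_geq ?(ltnW nm)//; exact: ltW.
  apply: (le_trans (ler_sum _ (fun k _ => gle k y))).
  rewrite geo_sum// (le_trans _ HN)// lerBlDr; apply: ler_wpDr.
    by rewrite exprn_ge0// invr_ge0.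
  apply: ler_wiXn2l; [by rewrite invr_ge0| |exact: Nm].
  by rewrite invf_le1// ler1n.
have gc : forall k, continuous (g k).
  move=> k y; apply: (@cvgMl_tmp _ _ _ _ (U k)); exact: Urysohn_continuous.
have cv := @ser_cvg _ _ g Hc.
have nd : forall y, nondecreasing_seq (series (fun k => g k y)).
  move=> y; apply/nondecreasing_seqP => n; rewrite /series /= big_nat_recr//=.
  by rewrite lerDl.
exists (fun y => limn (series (fun k => g k y))); split.
- exact: ser_cont.
- have -> : series (fun k => g k x) = fun _ => 0.
    apply/funext => n; rewrite /series /= big1// => k _.
    by rewrite /g Ux mulr0.
  exact: lim_cst.
- move=> n; apply: (lt_le_trans _ (nondecreasing_cvgn_le (nd (u n)) (cv (u n)) n.+1)).
  rewrite /series /= big_nat_recr//= /g Uu mulr1.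
  apply: ltr_wpDl; first by rewrite sumr_ge0// => k _; exact: g0.
  by rewrite exprn_gt0// invr_gt0.
- move=> y; apply: (le_trans _ (nondecreasing_cvgn_le (nd y) (cv y) 0)).
  by rewrite /series /= big_geq.
Qed.


Lemma subseq_cvg (K : topologicalType) (u : nat -> K) (x : K) (phi : nat -> nat) :
  (forall k, (phi k < phi k.+1)%N) -> u @ \oo --> x -> (fun k => u (phi k)) @ \oo --> x.
Proof.
move=> inc ux.
have ge : forall k, (k <= phi k)%N.
  elim => [|k IH]//; exact: leq_ltn_trans IH (inc k).
move=> A /ux [N _ HN]; exists N => // k /= Nk; apply: HN.
exact: leq_trans Nk (ge k).
Qed.

Lemma extract (R : realType) (t : nat -> R) :
  (forall n, 0 < t n) -> t @ \oo --> (0:R) ->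
  exists phi : nat -> nat, (forall k, (phi k < phi k.+1)%N) /\
    (forall k, t (phi k.+1) <= t (phi k) / 2).
Proof.
move=> tp t0.
have step : forall n, exists m, (n < m)%N /\ t m <= t n / 2.
  move=> n; have /cvgrPdist_le/(_ (t n / 2)) := t0.
  case; first by rewrite divr_gt0.
  move=> N _ HN; exists (maxn N n.+1); split; first by rewrite leq_max ltnSn orbT.
  have := HN (maxn N n.+1) (leq_maxl _ _).
  by rewrite sub0r normrN ger0_norm// ltW.
pose nx n := proj1_sig (cid (step n)).
have nxP : forall n, (n < nx n)%N /\ t (nx n) <= t n / 2.
  by move=> n; rewrite /nx; case: cid.
exists (fun k => iter k nx 0%N); split => k; rewrite iterS; [exact: (nxP _).1 | exact: (nxP _).2].
Qed.


Definition tent (R : realType) (c t : R) : R := Num.max 0 (1 - 4 * `|t / c - 1|).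

Lemma tent_ge0 (R : realType) (c t : R) : 0 <= tent c t.
Proof. by rewrite /tent le_max lexx. Qed.

Lemma tent_le1 (R : realType) (c t : R) : tent c t <= 1.
Proof.
rewrite /tent ge_max ler01 /= lerBlDr lerDl; by rewrite mulr_ge0.
Qed.

Lemma tent_c (R : realType) (c : R) : 0 < c -> tent c c = 1.
Proof.
move=> c0; rewrite /tent divff ?gt_eqF// subrr normr0 mulr0 subr0.
by rewrite max_r// ler01.
Qed.

Lemma tent_far (R : realType) (c t : R) : 0 < c -> 4^-1 <= `|t / c - 1| -> tent c t = 0.
Proof.
move=> c0 H; rewrite /tent max_l// subr_le0.
by rewrite -(ler_pM2l (x:=4^-1)) ?invr_gt0// mulrA mulVf// mul1r mulr1.
Qed.

Lemma tent_pos (R : realType) (c t : R) : 0 < c -> 0 < tent c t ->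
  3 / 4 * c < t /\ t < 5 / 4 * c.
Proof.
move=> c0 H.
have H1 : `|t / c - 1| < 4^-1.
  rewrite ltNge; apply/negP => /(tent_far c0); by move: H => /[swap] ->; rewrite ltxx.
move: H1; rewrite ltr_norml => /andP[h1 h2].
have e : t = (t / c) * c by rewrite mulfVK ?gt_eqF.
rewrite e; split; rewrite ltr_pM2r//; lra.
Qed.

Lemma tent_cont (R : realType) (T : topologicalType) (c : R) (h : T -> R) :
  continuous h -> continuous (fun y => tent c (h y)).
Proof.
move=> hc y; rewrite /tent.
have -> : (fun y => Num.max 0 (1 - 4 * `|h y / c - 1|)) =
   ((fun _ => 0) \max (fun y => 1 - 4 * `|h y / c - 1|)) by [].
apply: (@continuous_max R T (fun _ => 0 : R^o) (fun y => 1 - 4 * `|h y / c - 1| : R^o)).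
  exact: cvg_cst.
apply: cvgB; first exact: cvg_cst.
apply: cvgMl_tmp; apply: cvg_norm; apply: cvgB; last exact: cvg_cst.
apply: cvgMr_tmp; exact: hc.
Qed.


Lemma tau_lt (R : realType) (tau : nat -> R) :
  (forall k, 0 < tau k) -> (forall k, tau k.+1 <= tau k / 2) ->
  forall j k, (j < k)%N -> tau k <= tau j / 2.
Proof.
move=> tp th j; elim => [//|k IH]; rewrite ltnS leq_eqVlt => /orP[/eqP ->|jk].
  exact: th.
apply: (le_trans (th k)); have := IH jk; have := tp k; lra.
Qed.

Lemma tent_at (R : realType) (tau : nat -> R) :
  (forall k, 0 < tau k) -> (forall k, tau k.+1 <= tau k / 2) ->
  forall j k, tent (tau k) (tau j) = if j == k then 1 else 0.
Proof.
move=> tp th j k; have [->|jk] := eqVneq j k; first exact: tent_c.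
apply: tent_far => //.
have tk := tp k; have tj := tp j.
case: (ltngtP j k) => [lt|gt|/eqP]; last by rewrite (negbTE jk).
- have := tau_lt tp th lt.
  move=> H; have H2 : 2 <= tau j / tau k.
    by rewrite ler_pdivlMr//; lra.
  rewrite ger0_norm; lra.
- have := tau_lt tp th gt.
  move=> H; have H2 : tau j / tau k <= 2^-1.
    by rewrite ler_pdivrMr//; lra.
  rewrite ler0_norm; lra.
Qed.

Lemma tent_zero (R : realType) (c : R) : 0 < c -> tent c 0 = 0.
Proof. by move=> c0; apply: tent_far => //; rewrite mul0r sub0r normrN normr1 invf_le1// ler1n. Qed.

Lemma tent_disj (R : realType) (tau : nat -> R) :
  (forall k, 0 < tau k) -> (forall k, tau k.+1 <= tau k / 2) ->
  forall j k t, 0 < tent (tau j) t -> 0 < tent (tau k) t -> j = k.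
Proof.
move=> tp th.
suff H : forall j k t, (j < k)%N -> 0 < tent (tau j) t -> 0 < tent (tau k) t -> False.
  move=> j k t hj hk; case: (ltngtP j k) => [lt|gt|/eqP//]; first by case: (H _ _ _ lt hj hk).
  by case: (H _ _ _ gt hk hj).
move=> j k t jk /(tent_pos (tp j)) [a1 a2] /(tent_pos (tp k)) [b1 b2].
have := tau_lt tp th jk; have := tp k; lra.
Qed.

Lemma single (R : realType) (tau : nat -> R) :
  (forall k, 0 < tau k) -> (forall k, tau k.+1 <= tau k / 2) ->
  forall t, exists k0, forall k, k != k0 -> tent (tau k) t = 0.
Proof.
move=> tp th t.
have [[k0 Hk0]|N] := pselect (exists k0, 0 < tent (tau k0) t).
  exists k0 => k kk; apply/eqP; rewrite eq_le tent_ge0 andbT leNgt; apply/negP => H.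
  by move: kk; rewrite (tent_disj tp th H Hk0) eqxx.
exists 0%N => k _; apply/eqP; rewrite eq_le tent_ge0 andbT leNgt; apply/negP => H.
by apply: N; exists k.
Qed.

Lemma series_single (R : realType) (w c : nat -> R) k0 :
  (forall k, k != k0 -> w k = 0) ->
  limn (series (fun k => w k * c k)) = w k0 * c k0.
Proof.
move=> H; apply: (lim_near_cst (@Rhausdorff R)); exists k0.+1 => // n /= kn.
rewrite /series /= big_mkord (bigD1 (Ordinal kn))//= big1 ?addr0// => k kk.
rewrite H ?mul0r//; apply: contra kk => /eqP kk; apply/eqP/val_inj => /=; exact: kk.
Qed.


Ltac mm :=  repeat (case: ifP => [?|]; [idtac | move/negbT; rewrite -ltNge => ?]); lra.

Definition clip (R : realType) (z : R) : R := Num.max (-1) (Num.min 1 z).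

Lemma clipE (R : realType) (z : R) : clip z = if z <= -1 then -1 else if z <= 1 then z else 1.
Proof.
rewrite /clip; case: (leP 1 z) => h1.
  rewrite max_r ?lerN10//; case: ifP => h; [lra|]; case: ifP => h'; lra.
case: (leP (-1) z) => h2; case: ifP => h; try lra; case: ifP => h'; lra.
Qed.

Lemma clip_up (R : realType) (w : R) : clip w = 1 \/ w <= clip w.
Proof. rewrite !clipE; case: ifP => ?; [right; lra|]; case: ifP => ?; [right; lra|left; lra]. Qed.

Lemma clip_dn (R : realType) (w : R) : clip w = -1 \/ clip w <= w.
Proof. rewrite !clipE; case: ifP => ?; [left; lra|]; case: ifP => ?; [right; lra|right; lra]. Qed.

Lemma clip_bound (R : realType) (z : R) : `|clip z| <= 1.
Proof. rewrite !clipE ler_norml; apply/andP; split; mm. Qed.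

Lemma clip_lip (R : realType) (z w : R) : `|clip z - clip w| <= `|z - w|.
Proof.
rewrite !clipE.
have [h|h] := leP 0 (z - w).
  rewrite (ger0_norm h) ler_norml; apply/andP; split; mm.
rewrite (ltr0_norm h) ler_norml; apply/andP; split; mm.
Qed.

Lemma clip_id (R : realType) (z : R) : `|z| <= 1 -> clip z = z.
Proof. rewrite ler_norml => /andP[h1 h2]; rewrite !clipE; mm. Qed.


Definition sq (R : realType) (j : nat) : R :=
  (-1) ^+ trunc_log 2 j.+1 * 2^-1 ^+ trunc_log 2 j.+1.

Lemma sq_block (R : realType) p i : (i < 2 ^ p)%N ->
  sq R (2 ^ p - 1 + i) = (-1) ^+ p * 2^-1 ^+ p.
Proof.
move=> ip; rewrite /sq.
have -> : (2 ^ p - 1 + i).+1 = (2 ^ p + i)%N.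
  have : (0 < 2 ^ p)%N by rewrite expn_gt0.
  lia.
rewrite (@trunc_log_eq 2 p) //; apply/andP; split; first by rewrite leq_addr.
by rewrite expnS mul2n -addnn ltn_add2l.
Qed.

Lemma sq_cvg0 (R : realType) : sq R @ \oo --> (0:R).
Proof.
apply/cvgrPdist_le => e e0.
have [P HP] := geo_small e0.
exists (2 ^ P)%N => // j /= Pj.
rewrite sub0r normrN /sq normrM normrX normrN1 expr1n mul1r.
rewrite normrX ger0_norm ?invr_ge0// (le_trans _ HP)//.
apply: ler_wiXn2l; [by rewrite invr_ge0| by rewrite invf_le1// ler1n|].
apply: trunc_log_max => //; exact: leqW.
Qed.

Lemma run_up (R : realType) (a : nat -> R) m (d : R) n : 0 <= d ->
  (forall i, (i < n)%N -> a (m + i).+1 = clip (a (m + i) + d)) ->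
  a (m + n)%N = 1 \/ a m + n%:R * d <= a (m + n)%N.
Proof.
move=> d0; elim: n => [|n IH] H; first by right; rewrite addn0 mul0r addr0.
have [h|h] := IH (fun i hi => H i (ltnW hi)).
  left; rewrite addnS H// h; rewrite clipE; case: ifP => ?; [lra|]; case: ifP => ?; lra.
rewrite addnS H//; have [c|c] := clip_up (a (m + n)%N + d); first by left.
right; rewrite (le_trans _ c)// -nat1r mulrDl mul1r; lra.
Qed.

Lemma run_dn (R : realType) (a : nat -> R) m (d : R) n : 0 <= d ->
  (forall i, (i < n)%N -> a (m + i).+1 = clip (a (m + i) - d)) ->
  a (m + n)%N = -1 \/ a (m + n)%N <= a m - n%:R * d.
Proof.
move=> d0; elim: n => [|n IH] H; first by right; rewrite addn0 mul0r subr0.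
have [h|h] := IH (fun i hi => H i (ltnW hi)).
  left; rewrite addnS H// h; rewrite clipE; case: ifP => ?; [lra|]; case: ifP => ?; lra.
rewrite addnS H//; have [c|c] := clip_dn (a (m + n)%N - d); first by left.
right; rewrite (le_trans c)// -nat1r mulrDl mul1r; lra.
Qed.


Lemma pow2_ge p : (p < 2 ^ p)%N.
Proof. elim: p => [//|p IH]; rewrite expnS; lia. Qed.

Lemma orbit_noncvg (R : realType) (a : nat -> R) (L : R) :
  (forall j, a j.+1 = clip (a j + sq R j)) -> a @ \oo --> L -> False.
Proof.
move=> ha /cvgrPdist_le /(_ (8^-1)) [] // N _ HN.
pose d p : R := 2^-1 ^+ p.
have d0 : forall p, 0 <= d p by move=> p; rewrite exprn_ge0// invr_ge0.
have nd : forall p, (2 ^ p)%:R * d p = 1.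
  by move=> p; rewrite natrX -exprMn divff// expr1n.
have mN : forall p, (N <= p)%N -> (N <= 2 ^ p - 1)%N.
  by move=> p Np; have := pow2_ge p; lia.
have up : 7 / 8 <= L.
  pose p := (2 * N)%N; have Np : (N <= p)%N by rewrite /p; lia.
  have := @run_up R a (2 ^ p - 1) (d p) (2 ^ p) (d0 p).
  case.
  - move=> i ip; rewrite ha sq_block// /p exprM sqrrN !expr1n mul1r //.
  - move=> h; have := HN _ (leq_trans (mN p Np) (leq_addr (2 ^ p) _)).
    rewrite /= h => /ler_normlP [h1 h2]; lra.
  - rewrite nd => h; have := HN _ (leq_trans (mN p Np) (leq_addr (2 ^ p) _)).
    have := HN _ (mN p Np) => /ler_normlP [h1 h2] /ler_normlP [h3 h4]; lra.
have dn : L <= - (7 / 8).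
  pose p := (2 * N).+1; have Np : (N <= p)%N by rewrite /p; lia.
  have := @run_dn R a (2 ^ p - 1) (d p) (2 ^ p) (d0 p).
  case.
  - move=> i ip; rewrite ha sq_block// /p exprS exprM sqrrN !expr1n mulr1 mulN1r //.
  - move=> h; have := HN _ (leq_trans (mN p Np) (leq_addr (2 ^ p) _)).
    rewrite /= h => /ler_normlP [h1 h2]; lra.
  - rewrite nd => h; have := HN _ (leq_trans (mN p Np) (leq_addr (2 ^ p) _)).
    have := HN _ (mN p Np) => /ler_normlP [h1 h2] /ler_normlP [h3 h4]; lra.
lra.
Qed.


Lemma sum_single (R : realType) (F : nat -> R) k0 m n :
  (forall k, k != k0 -> F k = 0) ->
  \sum_(m <= k < n) F k = if (m <= k0 < n)%N then F k0 else 0.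
Proof.
move=> H; elim: n => [|n IH]; first by rewrite big_geq// andbF.
have [mn|nm] := leqP m n; last first.
  rewrite big_geq//; case: ifP => //; lia.
rewrite big_nat_recr//= IH.
have [e|nk] := eqVneq n k0.
  subst k0; rewrite ltnn andbF ltnSn mn add0r; done.
rewrite (H n nk) addr0; congr (if _ then _ else _).
move: nk; lia.
Qed.

Lemma conv_bound (R : realType) (w p q : R) : 0 <= w <= 1 -> `|p| <= 1 -> `|q| <= 1 ->
  `|p + w * (q - p)| <= 1.
Proof.
move=> /andP[w0 w1]; rewrite !ler_norml => /andP[p1 p2] /andP[q1 q2].
apply/andP; split; nra.
Qed.

Lemma conv_diff (R : realType) (w p q p' q' D : R) : 0 <= w <= 1 -> `|p - p'| <= D -> `|q - q'| <= D ->
  `|(p + w * (q - p)) - (p' + w * (q' - p'))| <= D.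
Proof.
move=> /andP[w0 w1]; rewrite !ler_norml => /andP[p1 p2] /andP[q1 q2].
apply/andP; split; nra.
Qed.


Lemma part1 (R : realType) (K : topologicalType) :
  compact [set: K] -> hausdorff_space K -> has_nontrivial_cvg_seq K -> ~ CK_BFPP R K.
Proof.
move=> cK hK [u [x [ux unx]]] BF.
have [h [hc hx hu h0]] := exists_h R cK hK unx.
have t0 : (fun n => h (u n)) @ \oo --> (0:R).
  rewrite -hx; exact: (cvg_comp _ _ ux (hc x)).
have [phi [phinc phih]] := extract hu t0.
pose v k := u (phi k).
pose tau k := h (v k).
have tp : forall k, 0 < tau k by move=> k; exact: hu.
have th : forall k, tau k.+1 <= tau k / 2 by move=> k; exact: phih.
have vx : v @ \oo --> x by exact: subseq_cvg.
pose b (f : K -> R) k := if k is k'.+1 then clip (f (v k') + sq R k') else 0.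
pose T (f : K -> R) := fun y => f x + limn (series (fun k => tent (tau k) (h y) * (b f k - f x))).
have Tform : forall y, exists k0, forall f, T f y = f x + tent (tau k0) (h y) * (b f k0 - f x).
  move=> y; have [k0 Hk0] := single tp th (h y).
  by exists k0 => f; rewrite /T (series_single _ Hk0).
have ball1 : forall f, CK_ball R K f -> forall y, `|f y| <= 1.
  by move=> f [cf nf] y; exact: le_trans (supnorm_ge cK cf y) nf.
have bb : forall f k, CK_ball R K f -> `|b f k| <= 1.
  by move=> f [|k] _; rewrite /b ?normr0 ?ler01 ?clip_bound.
have bcvg : forall f, CK_ball R K f -> b f @ \oo --> f x.
  move=> f Bf; have [cf _] := Bf.
  have fvx : (fun k => f (v k)) @ \oo --> f x := cvg_comp _ _ vx (cf x).
  apply/cvgrPdist_le => e e0.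
  have e20 : 0 < e / 2 by rewrite divr_gt0.
  have [N1 _ H1] := (proj1 (cvgrPdist_le _ _) fvx) _ e20.
  have [N2 _ H2] := (proj1 (cvgrPdist_le _ _) (@sq_cvg0 R)) _ e20.
  exists (maxn N1 N2).+1 => // [[|k]] //= /ltnSE; rewrite geq_max => /andP[k1 k2].
  rewrite -[X in X - _](clip_id (ball1 f Bf x)).
  apply: (le_trans (clip_lip _ _)).
  have := H1 k k1; have := H2 k k2; rewrite sub0r normrN => h2 h1.
  have -> : f x - (f (v k) + sq R k) = (f x - f (v k)) - sq R k by ring.
  apply: (le_trans (ler_normB _ _)).
  have -> : e = e / 2 + e / 2 by field.
  exact: lerD.
have Tcont : forall f, CK_ball R K f -> continuous (T f).
  move=> f Bf y; apply: continuousD; first exact: cvg_cst.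
  have gc : forall k, continuous (fun y => tent (tau k) (h y) * (b f k - f x)).
    move=> k z; apply: cvgMr_tmp; exact: tent_cont.
  apply: (ser_cont gc) => e e0.
  have [N _ HN] := (proj1 (cvgrPdist_le _ _) (bcvg f Bf)) _ e0.
  exists N => z m n Nm.
  have [k0 Hk0] := single tp th (h z).
  rewrite (@sum_single _ _ k0); last by move=> k kk; rewrite Hk0 ?mul0r.
  case: ifP => hk; last by rewrite normr0 ltW.
  rewrite normrM ger0_norm ?tent_ge0// distrC.
  rewrite -[e]mul1r ler_pM ?tent_ge0 ?tent_le1//.
  apply: HN; rewrite /=; move: hk Nm; lia.
have Tball : forall f, CK_ball R K f -> CK_ball R K (T f).
  move=> f Bf; split; first exact: Tcont.
  apply: (@supnorm_le R K _ _ x) => y.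
  have [k0 ->] := Tform y.
  apply: conv_bound; [by rewrite tent_ge0 tent_le1| exact: ball1 | exact: bb].
have Tne : forall f g, CK_ball R K f -> CK_ball R K g ->
    supnorm R K (T f - T g) <= supnorm R K (f - g).
  move=> f g Bf Bg.
  have [cf _] := Bf; have [cg _] := Bg.
  have cfg : continuous (f - g) by move=> z; apply: continuousB; [exact: cf|exact: cg].
  have Dge : forall z, `|f z - g z| <= supnorm R K (f - g).
    by move=> z; exact: (supnorm_ge cK cfg z).
  apply: (@supnorm_le R K _ _ x) => y /=.
  have [k0 Hk] := Tform y.
  have -> : (T f - T g) y = T f y - T g y by [].
  rewrite !Hk.
  apply: conv_diff; [by rewrite tent_ge0 tent_le1| exact: Dge|].
  case: k0 {Hk} => [|k] /=; first by rewrite subrr normr0 (le_trans _ (Dge x)).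
  apply: (le_trans (clip_lip _ _)).
  have -> : f (v k) + sq R k - (g (v k) + sq R k) = f (v k) - g (v k) by ring.
  exact: Dge.
have [f Bf Tf] := BF T Tball Tne.
have [cf _] := Bf.
have fv : forall j, f (v j) = b f j.
  move=> j; rewrite -{1}Tf /T /=.
  rewrite (@series_single _ _ _ j); last first.
    by move=> k kj; rewrite (tent_at tp th j k) eq_sym (negbTE kj).
  by rewrite (tent_at tp th j j) eqxx mul1r addrC subrK.
apply: (@orbit_noncvg R (fun j => f (v j)) (f x)).
  by move=> j; rewrite fv.
exact: (cvg_comp _ _ vx (cf x)).
Qed.


Definition pK (K : topologicalType) (x : K) : Type := K.
HB.instance Definition _ (K : topologicalType) (x : K) := Topological.copy (pK x) K.
HB.instance Definition _ (K : topologicalType) (x : K) := isPointed.Build (pK x) x.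

Lemma part2_seq (R : realType) (K : pseudoMetricType R) :
  compact [set: K] -> infinite_set [set: K] -> has_nontrivial_cvg_seq K.
Proof.
move=> cK iK.
have [x Hx] : exists x : K, forall e : R, 0 < e -> exists y, y <> x /\ ball x e y.
  apply: contrapT => N.
  have iso : forall x : K, open [set x].
    move=> x; apply: contrapT => nop; apply: N; exists x => e e0.
    apply: contrapT => nex; apply: nop.
    rewrite openE => z /= ->; apply/nbhs_ballP; exists e => // y bxy /=.
    by apply: contrapT => yx; apply: nex; exists y.
  have [x0 _] := infinite_setN0 iK.
  have cK' : cover_compact [set: pK x0] by rewrite -compact_cover; exact: cK.
  have := cK' K setT (fun i => [set i]) (fun i _ => iso i).
  case; first by move=> z _; exists z.
  move=> D' _ cov; apply: iK; apply: (sub_finite_set _ (finite_fset D')).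
  by move=> z /cov [i /= iD ->].
have Hy : forall n : nat, exists y, y <> x /\ ball x (n.+1%:R^-1) y.
  by move=> n; apply: Hx; rewrite invr_gt0.
pose u n := proj1_sig (cid (Hy n)).
have uP : forall n, u n <> x /\ ball x (n.+1%:R^-1) (u n).
  by move=> n; rewrite /u; case: cid.
exists u, x; split; last by move=> n; exact: (uP n).1.
apply/cvg_ballP => e e0.
have [k hk] := ltr_add_invr e0; rewrite add0r in hk.
exists k => // n /= kn.
apply: (le_ball _ (uP n).2); apply/ltW/(le_lt_trans _ hk).
rewrite lef_pV2 ?posrE// ler_nat ltnS //.
Qed.


Unset Implicit Arguments.

Theorem mainTheorem3 (R : realType) :
  (forall K : topologicalType,
     compact [set: K] -> hausdorff_space K -> has_nontrivial_cvg_seq K ->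
     ~ CK_BFPP R K)
  /\
  (forall K : pseudoMetricType R,
     hausdorff_space K -> compact [set: K] -> infinite_set [set: K] ->
     ~ CK_BFPP R K).
Proof.
split.
- move=> K cK hK hs; exact: part1.
- move=> K hK cK iK; apply: part1 => //; exact: part2_seq.
Qed.
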